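(* Let $S_6$ be the simple undirected graph on vertex set $\{1,2,\dots,33\}$ whose edges are the path edges $\{j,j+1\}$ for $j=1,\dots,32$ together with the ten edges $\{1,24\},\{4,9\},\{6,31\},\{7,12\},\{10,15\},\{13,18\},\{16,27\},\{22,33\},\{25,30\},\{28,33\}$. Designate incoming vertices $i_1=1,\ i_2=7,\ i_3=13,\ i_4=19,\ i_5=25,\ i_6=31$ and outgoing vertices $o_1=33,\ o_2=27,\ o_3=3,\ o_4=9,\ o_5=21,\ o_6=15$. Let $G$ be any finite simple undirected graph that contains $S_6$ as an induced subgraph, has at least one vertex not in $S_6$, and is such that every edge of $G$ joining a vertex of $S_6$ to a vertex outside $S_6$ has its endpoint in $S_6$ belonging to $\{i_1,\dots,i_6,o_1,\dots,o_6\}$. Then for every Hamiltonian cycle $H$ of $G$, the edges of $H$ having both endpoints in $S_6$ form a single path that visits every vertex of $S_6$ (i.e. $H$ enters $S_6$ exactly once, traverses all of it, and leaves), and the two endpoints of this path are $i_k$ and $o_k$ for some $k\in\{1,\dots,6\}$.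
   Context: A Hamiltonian cycle of a graph is a cycle passing through every vertex exactly once. This is the ''in-out property'' for the subgraph $S_6$: each copy of it behaves like a single vertex in any Hamiltonian cycle, and a cycle entering at the $k$-th incoming vertex must leave at the $k$-th outgoing vertex. *)

(* Defs.v *)
From mathcomp Require Import all_boot.
Set Implicit Arguments. Unset Strict Implicit. Unset Printing Implicit Defensive.

(* Vertices of S_6 are represented by a : 'I_33, with label (val a).+1 in {1..33}. *)
Definition s6_label (a : 'I_33) : nat := (val a).+1.

Definition s6_chords : seq (nat * nat) :=
  [:: (1,24); (4,9); (6,31); (7,12); (10,15); (13,18); (16,27); (22,33);
      (25,30); (28,33)].

Definition s6_adj_nat (x y : nat) : bool :=
  [|| x.+1 == y, y.+1 == x, (x, y) \in s6_chords | (y, x) \in s6_chords].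

Definition s6_adj (a b : 'I_33) : bool := s6_adj_nat (s6_label a) (s6_label b).

Definition s6_in_labels : seq nat := [:: 1; 7; 13; 19; 25; 31].
Definition s6_out_labels : seq nat := [:: 33; 27; 3; 9; 21; 15].
Definition s6_in (k : 'I_6) : nat := nth 0 s6_in_labels k.
Definition s6_out (k : 'I_6) : nat := nth 0 s6_out_labels k.
Definition s6_terminal (a : 'I_33) : bool :=
  (s6_label a \in s6_in_labels) || (s6_label a \in s6_out_labels).

Definition simple_graph (V : finType) (e : rel V) : Prop :=
  symmetric e /\ irreflexive e.

Definition hamiltonian_cycle (V : finType) (e : rel V) (c : seq V) : Prop :=
  [/\ uniq c, forall v, v \in c, 2 < size c & cycle e c].

Definition hc_edge (V : eqType) (c : seq V) (x y : V) : bool :=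
  (x \in c) && ((next c x == y) || (next c y == x)).

Definition path_pairs (T : Type) (p : seq T) : seq (T * T) := zip p (behead p).

(* Main.v *)
Require Import Defs.
From mathcomp Require Import all_boot.
Set Implicit Arguments. Unset Strict Implicit. Unset Printing Implicit Defensive.

Definition edgesN : seq (nat * nat) :=
 [seq (x.1.-1, x.2.-1) | x <- [:: (1, 2); (1, 24); (2, 3); (3, 4); (4, 5); (4, 9); (5, 6); (6, 7); (6, 31); (7, 8); (7, 12); (8, 9); (9, 10); (10, 11); (10, 15); (11, 12); (12, 13); (13, 14); (13, 18); (14, 15); (15, 16); (16, 17); (16, 27); (17, 18); (18, 19); (19, 20); (20, 21); (21, 22); (22, 23); (22, 33); (23, 24); (24, 25); (25, 26); (25, 30); (26, 27); (27, 28); (28, 29); (28, 33); (29, 30); (30, 31); (31, 32); (32, 33)]].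

Definition incT : seq (seq nat) := [::[::0; 1]; [::0; 2]; [::2; 3]; [::3; 4; 5]; [::4; 6]; [::6; 7; 8]; [::7; 9; 10]; [::9; 11]; [::5; 11; 12]; [::12; 13; 14]; [::13; 15]; [::10; 15; 16]; [::16; 17; 18]; [::17; 19]; [::14; 19; 20]; [::20; 21; 22]; [::21; 23]; [::18; 23; 24]; [::24; 25]; [::25; 26]; [::26; 27]; [::27; 28; 29]; [::28; 30]; [::1; 30; 31]; [::31; 32; 33]; [::32; 34]; [::22; 34; 35]; [::35; 36; 37]; [::36; 38]; [::33; 38; 39]; [::8; 39; 40]; [::40; 41]; [::29; 37; 41]].

Definition adjN (x y : nat) := s6_adj_nat x.+1 y.+1.
Definition termN (x : nat) := (x.+1 \in s6_in_labels) || (x.+1 \in s6_out_labels).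
Definition edN i := nth (0,0) edgesN i.
Definition incN v := nth [::] incT v.
Definition otherN (v : nat) (ed : nat * nat) := if ed.1 == v then ed.2 else ed.1.
Definition nbN v := [seq otherN v (edN i) | i <- incN v].

Definition okdegN (v : nat) (d : nat) := (d <= 2) && (termN v || (d == 2)).
Definition degN (y : seq bool) v := count (nth false y) (incN v).
Definition prunedN (y : seq bool) :=
  has (fun v => all (fun i => i < size y) (incN v) && ~~ okdegN v (degN y v)) (iota 0 33).

Definition yrelN (y : seq bool) a b :=
  has (fun i => nth false y i && (otherN a (edN i) == b)) (incN a).

Definition nbrs y a := [seq b <- nbN a | yrelN y a b].
Definition stepN y (S : seq nat) := undup (S ++ flatten (map (nbrs y) S)).
Fixpoint closF y n S := if n is n'.+1 then
  (let S' := stepN y S in if size S' == size S then S else closF y n' S') else S.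
Definition closN y a := closF y 34 [:: a].
Fixpoint hasL (p : nat -> bool) (s : seq nat) := if s is x :: s' then (if p x then true else hasL p s') else false.
Lemma hasLE p s : hasL p s = has p s.
Proof. by elim: s => //= x s ->; case: (p x). Qed.
Definition cc_test y a := let S := closN y a in
  if a \in S then if all (fun b => b < 33) S then
    if all (fun b => degN y b == 2) S then
         all (fun b => all (fun b' => yrelN y b b' ==> (b' \in S)) (iota 0 33)) S
    else false else false else false.
Definition closed_comp (y : seq bool) := hasL (cc_test y) (iota 0 33).

Definition paths_nat : seq (seq nat) :=
[:: [::12; 13; 14; 9; 10; 11; 6; 7; 8; 3; 4; 5; 30; 31; 32; 27; 28; 29; 24; 25; 26; 15; 16; 17; 18; 19; 20; 21; 22; 23; 0; 1; 2];
 [::18; 19; 20; 21; 22; 23; 0; 1; 2; 3; 4; 5; 30; 31; 32; 27; 28; 29; 24; 25; 26; 15; 16; 17; 12; 13; 14; 9; 10; 11; 6; 7; 8];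
 [::6; 7; 8; 9; 10; 11; 12; 13; 14; 15; 16; 17; 18; 19; 20; 21; 22; 23; 0; 1; 2; 3; 4; 5; 30; 31; 32; 27; 28; 29; 24; 25; 26];
 [::30; 31; 32; 27; 28; 29; 24; 25; 26; 15; 16; 17; 18; 19; 20; 21; 22; 23; 0; 1; 2; 3; 4; 5; 6; 7; 8; 9; 10; 11; 12; 13; 14];
 [::24; 25; 26; 27; 28; 29; 30; 31; 32; 21; 22; 23; 0; 1; 2; 3; 4; 5; 6; 7; 8; 9; 10; 11; 12; 13; 14; 15; 16; 17; 18; 19; 20];
 [::0; 1; 2; 3; 4; 5; 6; 7; 8; 9; 10; 11; 12; 13; 14; 15; 16; 17; 18; 19; 20; 21; 22; 23; 24; 25; 26; 27; 28; 29; 30; 31; 32]].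

Definition inpairsN (p : seq nat) a b := ((a, b) \in path_pairs p) || ((b, a) \in path_pairs p).
Definition ymapPN p := [seq inpairsN p ed.1 ed.2 | ed <- edgesN].

Definition leaf (y : seq bool) := if y \in map ymapPN paths_nat then true else closed_comp y.

Fixpoint search (pre : seq bool) (n : nat) : bool :=
  if prunedN pre then true else
  match n with 0 => leaf pre | n'.+1 => search (rcons pre false) n' && search (rcons pre true) n' end.

Lemma search_ok : search [::] 42.
Proof. vm_compute. reflexivity. Qed.

Lemma K_tab : all (fun v => [&& all (fun i => (i < 42) && (((edN i).1 == v) || ((edN i).2 == v))) (incN v),
   uniq (nbN v), all (fun b => b < 33) (nbN v) &
   all (fun b => (b \in nbN v) == adjN v b) (iota 0 33)]) (iota 0 33).
Proof. vm_compute. reflexivity. Qed.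

Lemma K_paths : all (fun p => [&& uniq p, size p == 33, all (fun b => b < 33) p,
   (let y := ymapPN p in all (fun a => all (fun b => inpairsN p a b == adjN a b && yrelN y a b) (iota 0 33)) (iota 0 33)) &
   has (fun k => ((head 0 p).+1 == nth 0 s6_in_labels k) && ((last 0 p).+1 == nth 0 s6_out_labels k)) (iota 0 6)]) paths_nat.
Proof. vm_compute. reflexivity. Qed.


Lemma pruned_cat pre rest : prunedN pre -> prunedN (pre ++ rest).
Proof.
move/hasP=> [v Hv /andP[Hall Hbad]]; apply/hasP; exists v => //.
have Hd : degN (pre ++ rest) v = degN pre v.
  rewrite /degN; apply: eq_in_count => i Hi.
  by rewrite nth_cat (allP Hall i Hi).
rewrite Hd Hbad andbT; apply/allP => i Hi.
by rewrite size_cat (leq_trans (allP Hall i Hi)) ?leq_addr.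
Qed.

Lemma search_sound n pre rest : search pre n -> size rest = n ->
  ~~ prunedN (pre ++ rest) -> leaf (pre ++ rest).
Proof.
elim: n pre rest => [|n IH] pre rest; rewrite [search _ _]/=; case: ifP => Hp.
- move=> _ _; rewrite (pruned_cat rest Hp); discriminate.
- case: rest => [|r rest] Hl Hs; last discriminate. move=> _; rewrite cats0; exact: Hl.
- move=> _ _; rewrite (pruned_cat rest Hp); discriminate.
- case: rest => [|r rest] /andP[H0 H1] Hs; first discriminate.
  case: Hs => Hs; rewrite -cat_rcons.
  case: r; [exact: IH H1 Hs | exact: IH H0 Hs].
Qed.

Lemma closed_all (V : finType) (c : seq V) (A : pred V) x :
  uniq c -> x \in c -> A x -> (forall y, A y -> A (next c y)) -> forall z, z \in c -> A z.
Proof.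
move=> Uc xc Ax HA z zc.
have: fconnect (next c) x z by rewrite (fconnect_cycle (cycle_next Uc) xc).
move/iter_findex <-; elim: (findex _ _ _) => //= n IH; exact: HA.
Qed.

Lemma next_neq_prev (V : finType) (c : seq V) x :
  uniq c -> 2 < size c -> x \in c -> next c x != prev c x.
Proof.
move=> Uc Sc xc; apply/eqP => H.
set z := next c x.
have nz : next c z = x by rewrite /z H next_prev.
pose A := [pred w | (w == x) || (w == z)].
have HA : forall w, w \in c -> A w.
  apply: (closed_all Uc xc); first by rewrite /A /= eqxx.
  by move=> w /orP[] /eqP->; rewrite /A /= ?nz eqxx ?orbT.
have Hs : {subset c <= [:: x; z]}.
  by move=> w /HA /orP[] /eqP->; rewrite !inE eqxx ?orbT.
by have := uniq_leq_size Uc Hs; rewrite leqNgt Sc.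
Qed.

Lemma zip_map2 (T U : Type) (g : T -> U) (s t : seq T) :
  zip (map g s) (map g t) = map (fun xy => (g xy.1, g xy.2)) (zip s t).
Proof. by elim: s t => [|x s IH] [|y t] //=; rewrite IH. Qed.

Lemma path_pairs_map (T U : Type) (g : T -> U) (s : seq T) :
  path_pairs (map g s) = map (fun xy => (g xy.1, g xy.2)) (path_pairs s).
Proof. by rewrite /path_pairs behead_map zip_map2. Qed.


Lemma K_tab_v v : v < 33 ->
  [/\ forall i, i \in incN v -> (i < 42) && (((edN i).1 == v) || ((edN i).2 == v)),
   uniq (nbN v), forall b, b \in nbN v -> b < 33 &
   forall b, b < 33 -> (b \in nbN v) = adjN v b].
Proof.
move=> Hv; have := allP K_tab v; rewrite mem_iota add0n => /(_ Hv) /and4P[H1 H2 H3 H4].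
split => //; first exact/allP.
- exact/allP.
- by move=> b Hb; apply/eqP; apply: (allP H4); rewrite mem_iota.
Qed.

Lemma inordV i : i < 33 -> val (inord i : 'I_33) = i.
Proof. exact: inordK. Qed.

Lemma head_val (s : seq 'I_33) : val (head ord0 s) = head 0 (map val s).
Proof. by case: s. Qed.

Lemma size_edgesN : size edgesN = 42. Proof. by []. Qed.

Theorem mainTheorem2 (V : finType) (e : rel V) (f : 'I_33 -> V) :
  simple_graph e ->
  injective f ->
  (forall a b : 'I_33, e (f a) (f b) = s6_adj a b) ->
  (exists v : V, v \notin codom f) ->
  (forall (a : 'I_33) (v : V), v \notin codom f -> e (f a) v -> s6_terminal a) ->
  forall c : seq V, hamiltonian_cycle e c ->
  exists p : seq 'I_33,
    [/\ uniq p, size p = 33,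
        (forall a b : 'I_33,
           hc_edge c (f a) (f b) = ((a, b) \in path_pairs p) || ((b, a) \in path_pairs p))
      & exists k : 'I_6,
          s6_label (head ord0 p) = s6_in k /\ s6_label (last ord0 p) = s6_out k].
Proof.
move=> [esym eirr] finj find [vout vout_n] hout c [Uc allc szc cyc].
pose E a b := hc_edge c (f a) (f b).
have HE1 : forall a b, E a b = (f b == next c (f a)) || (f b == prev c (f a)).
  move=> a b; rewrite /E /hc_edge allc /= (eq_sym (next c (f a))); congr orb.
  by apply/eqP/eqP => [<-|->]; [rewrite prev_next | rewrite next_prev].
have HE2 : forall a b, E a b -> s6_adj a b.
  move=> a b; rewrite HE1 -find => /orP[] /eqP->; first exact: next_cycle.
  by rewrite esym; apply: prev_cycle.
have Esym : forall a b, E a b = E b a.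
  by move=> a b; rewrite /E /hc_edge !allc /= orbC.
have Hterm : forall a, (next c (f a) \notin codom f) || (prev c (f a) \notin codom f) ->
    s6_terminal a.
  move=> a /orP[] H; apply: (hout a _ H); first exact: next_cycle.
  by rewrite esym; apply: prev_cycle.
pose EN x y := E (inord x) (inord y).
pose y := [seq EN ed.1 ed.2 | ed <- edgesN].
have ENsym : forall x z, EN x z = EN z x by move=> x z; apply: Esym.
have ENadj : forall x z, x < 33 -> z < 33 -> EN x z -> adjN x z.
  move=> x z hx hz /HE2; rewrite /s6_adj /s6_label !inordV //.
have Hy_nth : forall v i, v < 33 -> i \in incN v -> nth false y i = EN v (otherN v (edN i)).
  move=> v i Hv Hi; have [K1 _ _ _] := K_tab_v Hv.
  have /andP[Hi42 Hend] := K1 i Hi.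
  rewrite (nth_map (0,0)) ?size_edgesN // -/(edN i) /otherN.
  case: ifP => [/eqP <-|H1] //; rewrite H1 /= in Hend.
  by rewrite (eqP Hend) ENsym.
have Hdeg : forall v, v < 33 -> degN y v = count (EN v) (nbN v).
  move=> v Hv; rewrite /degN /nbN count_map; apply: eq_in_count => i Hi.
  by rewrite (Hy_nth v i Hv Hi).
have Hyrel : forall b b', b < 33 -> b' < 33 -> yrelN y b b' = EN b b'.
  move=> b b' Hb Hb'; have [_ _ _ K4] := K_tab_v Hb.
  have -> : yrelN y b b' = has (fun w => EN b w && (w == b')) (nbN b).
    rewrite /yrelN /nbN has_map; apply: eq_in_has => i Hi.
    by rewrite (Hy_nth b i Hb Hi).
  apply/hasP/idP => [[w _ /andP[H /eqP<-]] // | H].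
  by exists b'; [rewrite K4 //; apply: ENadj | rewrite H eqxx].
have Hcnt : forall v, v < 33 -> forall L : seq V,
    (forall w, w < 33 -> EN v w -> f (inord w) \in L) -> count (EN v) (nbN v) <= size L.
  move=> v Hv L HL; have [_ K2 K3 _] := K_tab_v Hv.
  rewrite -size_filter -(size_map (fun w => f (inord w))).
  apply: uniq_leq_size.
    rewrite map_inj_in_uniq ?filter_uniq // => w1 w2.
    rewrite !mem_filter => /andP[_ /K3 h1] /andP[_ /K3 h2] /finj /(congr1 val).
    by rewrite !inordV.
  move=> x /mapP[w]; rewrite mem_filter => /andP[Hw /K3 h] ->.
  exact: HL.
have Hnx : forall v, v < 33 -> next c (f (inord v)) \notin codom f ->
    count (EN v) (nbN v) <= 1.
  move=> v Hv Hn; apply: (Hcnt v Hv [:: prev c (f (inord v))]) => w hw.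
  rewrite /EN HE1 => /orP[] /eqP Hf; last by rewrite Hf inE.
  by move: Hn; rewrite -Hf codom_f.
have Hpv : forall v, v < 33 -> prev c (f (inord v)) \notin codom f ->
    count (EN v) (nbN v) <= 1.
  move=> v Hv Hn; apply: (Hcnt v Hv [:: next c (f (inord v))]) => w hw.
  rewrite /EN HE1 => /orP[] /eqP Hf; first by rewrite Hf inE.
  by move: Hn; rewrite -Hf codom_f.
have Hok : forall v, v < 33 -> okdegN v (degN y v).
  move=> v Hv; rewrite /okdegN Hdeg //.
  have -> : count (EN v) (nbN v) <= 2.
    apply: (Hcnt v Hv [:: next c (f (inord v)); prev c (f (inord v))]) => w hw.
    by rewrite /EN HE1 => /orP[] /eqP->; rewrite !inE eqxx ?orbT.
  have -> : termN v = s6_terminal (inord v) by rewrite /s6_terminal /s6_label inordV.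
  case: (boolP (s6_terminal (inord v))) => // Ht /=.
  case: (boolP (next c (f (inord v)) \in codom f)) => Hn; last first.
    by case/negP: Ht; apply: Hterm; rewrite Hn.
  case: (boolP (prev c (f (inord v)) \in codom f)) => Hp; last first.
    by case/negP: Ht; apply: Hterm; rewrite Hp orbT.
  have [_ K2 _ K4] := K_tab_v Hv.
  move/codomP: Hn => [a1 Ha1]; move/codomP: Hp => [a2 Ha2].
  have Hne : a1 != a2.
    apply/eqP => Heq; have := next_neq_prev Uc szc (allc (f (inord v))).
    by rewrite Ha1 Ha2 Heq eqxx.
  have Hin : forall a', (f a' == next c (f (inord v))) || (f a' == prev c (f (inord v))) ->
      val a' \in filter (EN v) (nbN v).
    move=> a' Ha'; have HE : EN v a' by rewrite /EN inord_val HE1.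
    rewrite mem_filter; apply/andP; split; first exact: HE.
    by rewrite K4; [exact (ENadj v a' Hv (ltn_ord a') HE) | exact (ltn_ord a')].
  have Hge : 2 <= count (EN v) (nbN v).
    rewrite -size_filter; apply: (uniq_leq_size (s1 := [:: val a1; val a2])).
      by rewrite /= inE andbT; apply: contra Hne => /eqP/val_inj->.
    move=> x; rewrite !inE => /orP[] /eqP->; apply: Hin.
      by rewrite -Ha1 eqxx.
    by rewrite -Ha2 eqxx orbT.
  rewrite eqn_leq Hge andbT.
  apply: (Hcnt v Hv [:: next c (f (inord v)); prev c (f (inord v))]) => w hw.
  by rewrite /EN HE1 => /orP[] /eqP->; rewrite !inE eqxx ?orbT.
have Hnp : ~~ prunedN y.
  apply/hasPn => v; rewrite mem_iota add0n => Hv.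
  by rewrite negb_and negbK Hok // orbT.
have Hsz : size y = 42 by rewrite size_map.
have Hleaf : leaf y := search_sound search_ok Hsz Hnp.
move: Hleaf; rewrite /leaf; case: ifP => [Hmem _ | _ Hcc].
  move/mapP: Hmem => [p Hp Hyp].
  have := allP K_paths p Hp => /and5P[Pu /eqP Ps Pb Pe Pk].
  have Pe2 : all (fun a => all (fun b => inpairsN p a b == adjN a b && yrelN (ymapPN p) a b)
     (iota 0 33)) (iota 0 33) := Pe.
  have Pe' : forall a b, a < 33 -> b < 33 -> inpairsN p a b = adjN a b && yrelN (ymapPN p) a b.
    move=> a b ha hb; apply/eqP.
    by have := allP (allP Pe2 a _) b; rewrite !mem_iota !add0n; apply => //.
  pose q : seq 'I_33 := map (fun x => inord x) p.
  have Hval : map val q = p.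
    rewrite /q -map_comp; apply: map_id_in => x hx /=; exact: inordV (allP Pb x hx).
  have Hinj : injective (fun xy : 'I_33 * 'I_33 => (val xy.1, val xy.2)).
    by move=> [x1 x2] [z1 z2] /= [/val_inj-> /val_inj->].
  have Hpp : forall a b : 'I_33, ((a,b) \in path_pairs q) = ((val a, val b) \in path_pairs p).
    move=> a' b'; have := mem_map Hinj (path_pairs q) (a', b'); rewrite -path_pairs_map Hval => <-; by [].
  exists q; split.
  - by rewrite -(map_inj_uniq val_inj) Hval.
  - by rewrite size_map Ps.
  - move=> a b; rewrite !Hpp.
    have -> : ((val a, val b) \in path_pairs p) || ((val b, val a) \in path_pairs p)
       = inpairsN p a b by [].
    rewrite (Pe' _ _ (ltn_ord a) (ltn_ord b)) -Hyp.
    rewrite (Hyrel _ _ (ltn_ord a) (ltn_ord b)) /EN !inord_val.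
    case: (boolP (E a b)) => H; last by rewrite andbF; apply/negbTE.
    have H' : hc_edge c (f a) (f b) := H.
    rewrite andbT H'; symmetry; exact (HE2 a b H).
  - move/hasP: Pk => [k Hk /andP[/eqP H1 /eqP H2]].
    rewrite mem_iota add0n in Hk.
    exists (Ordinal Hk); rewrite /s6_label.
    have -> : val (head ord0 q) = head 0 p by rewrite head_val Hval.
    have -> : val (last ord0 q) = last 0 p by rewrite -Hval; symmetry; exact: (last_map val q ord0).
    by split.
move: Hcc; rewrite /closed_comp hasLE => /hasP[a0 _].
rewrite /cc_test.
set S := closN y a0.
case: ifP => [Ha0|_ F]; last discriminate F.
case: ifP => [Hbnd|_ F]; last discriminate F.
case: ifP => [Hdeg2 Hclos|_ F]; last discriminate F.
pose A : pred V := fun x => has (fun b => x == f (inord b)) S.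
have HA : forall z, z \in c -> A z.
  apply: (closed_all (x := f (inord a0)) Uc (allc _)).
    by apply/hasP; exists a0.
  move=> w /hasP[b Hb /eqP->].
  have hb := allP Hbnd b Hb.
  have hd := allP Hdeg2 b Hb; rewrite Hdeg // in hd.
  have Hn : next c (f (inord b)) \in codom f.
    apply/negPn/negP => Hn; have := Hnx b hb Hn; by rewrite (eqP hd).
  move/codomP: Hn => [a' Ha'].
  have HE : EN b a' by rewrite /EN inord_val HE1 -Ha' eqxx.
  have Hy : yrelN y b a' by rewrite (Hyrel _ _ hb (ltn_ord a')).
  have HS : nat_of_ord a' \in S.
    have := allP (allP Hclos b Hb) a'; rewrite mem_iota add0n.
    by move=> /(_ (ltn_ord a')) /implyP; apply.
  by apply/hasP; exists (nat_of_ord a') => //; rewrite inord_val -Ha'.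
have := HA vout (allc vout) => /hasP[b _ /eqP Hv].
by move: vout_n; rewrite Hv codom_f.
Qed.
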